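(* Let $f:\mathbb R^{n+m}\to\mathbb R$ be a $C^5$ function, written $f(\mathbf x,\mathbf y)$ with $\mathbf x\in\mathbb R^n$, $\mathbf y\in\mathbb R^m$, with a critical point at the origin and $f(0)=0$, such that (A1) the Hessian of $f$ at the origin is positive semidefinite of rank $n$ and nullity $m\ge1$, and (A2) its kernel is $\{(0,\mathbf y):\mathbf y\in\mathbb R^m\}$. Let $(\mathbf x'',\mathbf y')$ be a point of the unit sphere in $\mathbb R^{n+m}$ such that $t\mapsto f(\mathbf x''t^2,\mathbf y't)$ vanishes through fourth order in $t$ (its Taylor coefficients at $t=0$ of orders $0,1,2,3,4$ are all zero). Then $\mathbf y'\ne0$; in particular the trajectory $t\mapsto(\mathbf x''t^2,\mathbf y't)$ is $1$-active.
   Context: A $C^k$ vector-valued function $\varphi(t)$ is $k$-vanishing if $\varphi^{(i)}(0)=0$ for $1\le i\le k$, and $k$-active if it is $(k-1)$-vanishing but not $k$-vanishing; thus $1$-active means the first derivative at $t=0$ is nonzero. *)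

(* Defs.v *)
From HB Require Import structures.
From mathcomp Require Import all_boot all_order all_algebra.
From mathcomp Require Import all_classical all_reals all_analysis.
Set Implicit Arguments. Unset Strict Implicit. Unset Printing Implicit Defensive.
Import Order.TTheory GRing.Theory Num.Theory.
Import numFieldNormedType.Exports.
Local Open Scope ring_scope.

Section Defs.
Variable R : realType.

Definition evec N (i : 'I_N) : 'rV[R]_N := delta_mx 0 i.

Fixpoint pder N (s : seq 'I_N) (f : 'rV[R]_N -> R) : 'rV[R]_N -> R :=
  match s with
  | [::] => f
  | i :: s' => fun x => 'D_(evec i) (pder s' f) x
  end.

Definition Ck N (k : nat) (f : 'rV[R]_N -> R) : Prop :=
  forall s : seq 'I_N, (size s <= k)%N ->
    continuous (pder s f) /\
    ((size s < k)%N -> forall (i : 'I_N) (x : 'rV[R]_N),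
        derivable (pder s f) x (evec i)).

Definition hessian N (f : 'rV[R]_N -> R) (x : 'rV[R]_N) : 'M[R]_N :=
  \matrix_(i, j) pder [:: i; j] f x.

Definition psd N (A : 'M[R]_N) : Prop :=
  forall v : 'rV[R]_N, 0 <= (v *m A *m v^T) 0 0.

Definition sqnorm N (v : 'rV[R]_N) : R := \sum_(i < N) v 0 i ^+ 2.

Definition k_vanishing (V : normedModType R) (k : nat) (phi : R -> V) : Prop :=
  forall i, (1 <= i <= k)%N -> derive1n i phi 0 = 0.

Definition k_active (V : normedModType R) (k : nat) (phi : R -> V) : Prop :=
  k_vanishing k.-1 phi /\ ~ k_vanishing k phi.

End Defs.

(* Main.v *)
Require Import Defs.
From HB Require Import structures.
From mathcomp Require Import all_boot all_order all_algebra.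
From mathcomp Require Import all_classical all_reals all_analysis.
From mathcomp Require Import ring lra.
Import Order.TTheory GRing.Theory Num.Theory.
Import numFieldNormedType.Exports.
Local Open Scope ring_scope.
Local Open Scope classical_set_scope.

Section S.
Variable R : realType.
Variable N : nat.

Lemma lim_pts (q : R -> R) (G : 'rV[R]_N -> R) (x : 'rV[R]_N) (K : R) :
  {for x, continuous G} ->
  (forall h : R, h != 0 -> exists z, `|z - x| <= `|h| * K /\ q h = G z) ->
  q h @[h --> 0^'] --> G x.
Proof.
move=> cG hz.
have H : forall h : R, exists z : 'rV[R]_N,
    h != 0 -> `|z - x| <= `|h| * K /\ q h = G z.
  move=> h; have [->|h0] := eqVneq h 0; first by exists x => /eqP.
  by have [z ?] := hz h h0; exists z.
have [z hz'] := choice H.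
have zx : z h @[h --> 0^'] --> x.
  apply/cvgrPdist_le => /= e e0.
  have K1 : 0 < `|K| + 1 by rewrite ltr_wpDl.
  near=> h.
  have h0 : h != 0 by near: h; exact: nbhs_dnbhs_neq.
  have hl : `|h| <= e / (`|K| + 1).
    near: h; apply: dnbhs0_le; exact: divr_gt0.
  rewrite distrC; apply: (le_trans (hz' h h0).1).
  apply: (@le_trans _ _ (`|h| * (`|K| + 1))).
    by rewrite ler_wpM2l // (le_trans (ler_norm K)) // lerDl.
  by rewrite -ler_pdivlMr.
have Gz := cvg_comp _ _ zx cG.
apply: cvg_trans Gz; apply: near_eq_cvg.
near=> h.
have h0 : h != 0 by near: h; exact: nbhs_dnbhs_neq.
by rewrite /= (hz' h h0).2.
Unshelve. all: by end_near.
Qed.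

Lemma line_is_derive (F : 'rV[R]_N -> R) (e y : 'rV[R]_N) (t : R) :
  derivable F (t *: e + y) e ->
  is_derive t 1 (fun s => F (s *: e + y)) ('D_e F (t *: e + y)).
Proof.
move=> d.
have E : (fun h : R => h^-1 *: (((fun s => F (s *: e + y)) \o shift t) (h *: 1)
            - F (t *: e + y))) =
         (fun h : R => h^-1 *: ((F \o shift (t *: e + y)) (h *: e) - F (t *: e + y))).
  apply/funext => h /=.
  by rewrite /shift /= [h *: 1]mulr1 scalerDl addrA.
split; first by rewrite /derivable E.
by rewrite /derive E.
Qed.

Lemma mvt1 (phi dphi : R -> R) :
  (forall t : R, is_derive t 1 phi (dphi t)) ->
  forall t : R, exists c : R, `|c| <= `|t| /\ phi t - phi 0 = t * dphi c.
Proof.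
move=> hd t.
have cont : {within `[Order.min 0 t, Order.max 0 t], continuous phi}.
  apply: continuous_subspaceT => x.
  have /derivable1_diffP dx := @ex_derive _ _ _ _ _ _ _ (hd x).
  exact: differentiable_continuous.
have [t0|t0] := leP 0 t.
  have cont' : {within `[0, t], continuous phi}.
    by move: cont; rewrite (min_idPl t0) (max_idPr t0).
  have [c c1 c2] := @MVT_segment R phi dphi 0 t t0 (fun x _ => hd x) cont'.
  exists c; split; last by rewrite c2 subr0 mulrC.
  move: c1; rewrite in_itv /= => /andP[c0 ct].
  by rewrite !ger0_norm // (le_trans c0 ct).
have t0' : t <= 0 by apply: ltW.
have cont' : {within `[t, 0], continuous phi}.
  by move: cont; rewrite (min_idPr t0') (max_idPl t0').
have [c c1 c2] := @MVT_segment R phi dphi t 0 t0' (fun x _ => hd x) cont'.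
exists c; split.
  move: c1; rewrite in_itv /= => /andP[tc c0].
  by rewrite !ler0_norm // ?lerN2 // (le_trans tc c0).
by rewrite -opprB c2 sub0r mulrN opprK mulrC.
Qed.


Lemma key (F : 'rV[R]_N -> R) (e w x : 'rV[R]_N) (a : R) :
  (forall z, derivable F z e) -> {for x, continuous (fun z => 'D_e F z)} ->
  (fun h : R => h^-1 * (F ((h * a) *: e + (h *: w + x)) - F (h *: w + x)))
     h @[h --> 0^'] --> a * 'D_e F x.
Proof.
move=> hd cD.
have cG : {for x, continuous (fun z => a * 'D_e F z)}.
  exact: (cvgMl_tmp (a := a) cD).
apply: (@lim_pts _ _ _ (`|a| * `|e| + `|w|) cG) => h h0.
set y := h *: w + x.
have [c [hc E]] := mvt1 _ _ (fun t => @line_is_derive F e y t (hd _)) (h * a).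
exists (c *: e + y); split.
  rewrite /y addrA addrK.
  apply: (le_trans (ler_normD _ _)); rewrite !normrZ mulrDr mulrA.
  rewrite lerD2r ler_wpM2r //.
  by rewrite normrM in hc.
rewrite scale0r add0r in E.
by rewrite E mulrA mulKf.
Qed.

Lemma C1 (F : 'rV[R]_N -> R) :
  (forall i z, derivable F z 'e_i) ->
  (forall i, continuous (fun z => 'D_('e_i) F z)) ->
  forall x u, is_derive x u F (\sum_i u 0 i * 'D_('e_i) F x).
Proof.
move=> hd hc x u.
have P : forall s : seq 'I_N,
  (fun h : R => h^-1 * (F (h *: (\sum_(i <- s) u 0 i *: 'e_i) + x) - F x))
     h @[h --> 0^'] --> \sum_(i <- s) u 0 i * 'D_('e_i) F x.
  elim=> [|i s IH].
    have -> : (fun h : R => h^-1 * (F (h *: (\sum_(i <- [::]) u 0 i *: 'e_i) + x) - F x))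
       = fun _ => 0.
      by apply/funext => h; rewrite big_nil scaler0 add0r subrr mulr0.
    rewrite big_nil; exact: cvg_cst.
  have -> : (fun h : R => h^-1 * (F (h *: (\sum_(j <- i :: s) u 0 j *: 'e_j) + x) - F x))
     = (fun h : R => h^-1 * (F ((h * u 0 i) *: 'e_i +
                 (h *: (\sum_(j <- s) u 0 j *: 'e_j) + x))
              - F (h *: (\sum_(j <- s) u 0 j *: 'e_j) + x))
     + h^-1 * (F (h *: (\sum_(j <- s) u 0 j *: 'e_j) + x) - F x)).
    apply/funext => h /=.
    by rewrite -mulrDr addrA subrK big_cons scalerDr scalerA addrA.
  rewrite big_cons.
  exact: (cvgD (@key F 'e_i (\sum_(j <- s) u 0 j *: 'e_j) x (u 0 i) (hd i) (hc i x)) IH).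
have L := P (index_enum 'I_N).
rewrite -row_sum_delta in L.
have E : (fun h : R => h^-1 *: ((F \o shift x) (h *: u) - F x)) =
         (fun h : R => h^-1 * (F (h *: u + x) - F x)) by [].
split; first by rewrite /derivable E; exact: cvgP L.
by rewrite /derive E; exact: cvg_lim L.
Qed.


Definition Dl (F : 'rV[R]_N -> R) (e1 e2 x : 'rV[R]_N) (h : R) :=
  F (h *: e1 + (h *: e2 + x)) - F (h *: e2 + x) - F (h *: e1 + x) + F x.

Lemma schwarz_half (F : 'rV[R]_N -> R) (e1 e2 x : 'rV[R]_N) :
  (forall z, derivable F z e1) ->
  (forall z, derivable (fun z => 'D_e1 F z) z e2) ->
  {for x, continuous (fun z => 'D_e2 (fun y => 'D_e1 F y) z)} ->
  (fun h : R => h^-1 * (h^-1 * Dl F e1 e2 x h)) h @[h --> 0^'] -->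
     'D_e2 (fun y => 'D_e1 F y) x.
Proof.
move=> d1 d2 cD.
apply: (@lim_pts _ _ _ (`|e1| + `|e2|) cD) => h h0.
pose psi := fun s : R => F (s *: e1 + (h *: e2 + x)) - F (s *: e1 + x).
have dpsi : forall t : R, is_derive t 1 psi
   ('D_e1 F (t *: e1 + (h *: e2 + x)) - 'D_e1 F (t *: e1 + x)).
  move=> t; apply: is_deriveB.
    exact: (@line_is_derive F e1 (h *: e2 + x) t (d1 _)).
  exact: (@line_is_derive F e1 x t (d1 _)).
have [c [hc E1]] := mvt1 _ _ dpsi h.
pose y := c *: e1 + x.
have [d [hd E2]] := mvt1 _ _
   (fun t => @line_is_derive (fun z => 'D_e1 F z) e2 y t (d2 _)) h.
exists (d *: e2 + y); split.
  rewrite /y addrA addrK.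
  apply: (le_trans (ler_normD _ _)); rewrite !normrZ mulrDr addrC.
  by apply: lerD; apply: ler_wpM2r.
have ED : Dl F e1 e2 x h = psi h - psi 0.
  by rewrite /Dl /psi !scale0r !add0r; ring.
rewrite scale0r add0r /y in E2.
rewrite ED E1 [c *: e1 + _]addrCA E2.
by rewrite !mulKf.
Qed.


Lemma schwarz (F : 'rV[R]_N -> R) (e1 e2 x : 'rV[R]_N) :
  (forall z, derivable F z e1) ->
  (forall z, derivable F z e2) ->
  (forall z, derivable (fun z => 'D_e1 F z) z e2) ->
  (forall z, derivable (fun z => 'D_e2 F z) z e1) ->
  {for x, continuous (fun z => 'D_e2 (fun y => 'D_e1 F y) z)} ->
  {for x, continuous (fun z => 'D_e1 (fun y => 'D_e2 F y) z)} ->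
  'D_e2 (fun y => 'D_e1 F y) x = 'D_e1 (fun y => 'D_e2 F y) x.
Proof.
move=> d1 d2 d12 d21 c12 c21.
have A := @schwarz_half F e1 e2 x d1 d12 c12.
have B := @schwarz_half F e2 e1 x d2 d21 c21.
have E : Dl F e2 e1 x = Dl F e1 e2 x.
  apply/funext => h; rewrite /Dl [h *: e2 + _]addrCA; ring.
rewrite E in B.
exact: (cvg_unique _ A B).
Qed.

End S.

Section S2.
Variable R : realType.
Variable N : nat.

Lemma pder_rcons (s : seq 'I_N) i (F : 'rV[R]_N -> R) :
  pder s (pder [:: i] F) = pder (rcons s i) F.
Proof. by elim: s => [|j s IH] //=; rewrite IH. Qed.

Lemma Ck_pder r (F : 'rV[R]_N -> R) i : Ck r.+1 F -> Ck r (pder [:: i] F).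
Proof.
move=> hF s hs; rewrite pder_rcons.
have hs2 : (size (rcons s i) <= r.+1)%N by rewrite size_rcons.
have [c d] := hF (rcons s i) hs2.
split => // hs'; apply: d; by rewrite size_rcons.
Qed.

Fixpoint G (v : 'rV[R]_N) k (F : 'rV[R]_N -> R) : 'rV[R]_N -> R :=
  match k with
  | 0 => F
  | k'.+1 => fun x => \sum_i v 0 i * G v k' (pder [:: i] F) x
  end.

Lemma is_derive_lin (c : 'I_N -> R) (h : 'I_N -> R -> R) (dh : 'I_N -> R) (t : R) :
  (forall i, is_derive t 1 (h i) (dh i)) ->
  is_derive t 1 (fun s => \sum_i c i * h i s) (\sum_i c i * dh i).
Proof.
move=> H.
have := @is_derive_sum _ _ _ _ (fun i => c i \*: h i) t 1 (fun i => c i *: dh i)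
   (fun i => is_deriveZ (c i) (H i)).
by rewrite fct_sumE.
Qed.

Lemma line_G (v : 'rV[R]_N) k : forall F : 'rV[R]_N -> R, Ck k.+1 F ->
  forall t : R, is_derive t 1 (fun s => G v k F (s *: v)) (G v k.+1 F (t *: v)).
Proof.
elim: k => [|k IH] F hF t.
  have hd : forall i z, derivable F z 'e_i.
    by move=> i z; exact: ((hF [::] isT).2 isT i z).
  have hc : forall i, continuous (fun z => 'D_'e_i F z).
    by move=> i; exact: (hF [:: i] isT).1.
  have C := @C1 R N F hd hc (t *: v) v.
  have dv : derivable F (t *: v + 0) v.
    by rewrite addr0; exact: (@ex_derive _ _ _ _ _ _ _ C).
  have L := @line_is_derive R N F v 0 t dv.
  have -> : (fun s : R => G v 0 F (s *: v)) = (fun s => F (s *: v + 0)).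
    by apply/funext => s; rewrite addr0.
  apply: (is_derive_eq L).
  rewrite addr0 /=.
  by case: C => _ ->.
apply: (@is_derive_lin (fun i => v 0 i)
          (fun i s => G v k (pder [:: i] F) (s *: v)) _ t).
move=> i; apply: IH.
exact: Ck_pder.
Qed.

End S2.

Lemma Ck_le (R : realType) N r r' (F : 'rV[R]_N -> R) :
  Ck r F -> (r' <= r)%N -> Ck r' F.
Proof.
move=> h le s hs; have [c d] := h s (leq_trans hs le).
split => // hs'; apply: d; exact: leq_trans hs' le.
Qed.

Lemma lin_quad (R : realType) (b c : R) : 0 <= c ->
  (forall t, 0 <= 2 * t * b + t ^+ 2 * c) -> b = 0.
Proof.
move=> c0 H.
have d0 : 0 < c + 1 by lra.
have := H (- b / (c + 1)).
have -> : 2 * (- b / (c + 1)) * b + (- b / (c + 1)) ^+ 2 * c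
    = - (b ^+ 2 * (c + 2)) / (c + 1) ^+ 2.
  by field; rewrite gt_eqF.
rewrite mulNr oppr_ge0 pmulr_lle0; last by rewrite invr_gt0 exprn_gt0.
move=> h.
have hb : b ^+ 2 <= 0 by nra.
by apply/eqP; rewrite -sqrf_eq0 eq_le hb sqr_ge0.
Qed.

Lemma hess_sym (R : realType) N (f : 'rV[R]_N -> R) : Ck 2 f ->
  (hessian f 0)^T = hessian f 0.
Proof.
move=> hf; apply/matrixP => i j; rewrite !mxE.
have d1 : forall z, derivable f z 'e_i by move=> z; exact: ((hf [::] isT).2 isT i z).
have d2 : forall z, derivable f z 'e_j by move=> z; exact: ((hf [::] isT).2 isT j z).
have d12 : forall z, derivable (fun z => 'D_'e_i f z) z 'e_j.
  by move=> z; exact: ((hf [:: i] isT).2 isT j z).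
have d21 : forall z, derivable (fun z => 'D_'e_j f z) z 'e_i.
  by move=> z; exact: ((hf [:: j] isT).2 isT i z).
have c12 := (hf [:: j; i] isT).1 0.
have c21 := (hf [:: i; j] isT).1 0.
exact: (@schwarz R N f 'e_i 'e_j 0 d1 d2 d12 d21 c12 c21).
Qed.

Lemma deriv_phi (R : realType) (n m : nat) (x2 : 'rV[R]_n) (y1 : 'rV[R]_m) :
  derive1 (fun t : R => row_mx (t ^+ 2 *: x2) (t *: y1)) 0 = row_mx 0 y1.
Proof.
set A : 'rV[R]_(n + m) := row_mx x2 0; set B : 'rV[R]_(n + m) := row_mx 0 y1.
have -> : (fun t : R => row_mx (t ^+ 2 *: x2) (t *: y1)) =
          (fun t : R => t ^+ 2 *: A + t *: B).
  by apply/funext => t; rewrite /A /B !scale_row_mx add_row_mx !scaler0 addr0 add0r.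
rewrite derive1E /derive.
have hid : (fun h : R => h) @ 0^' --> (0 : R).
  apply: cvg_within_filter; exact: cvg_id.
have L : (fun h : R => h *: A + B) @ 0^' --> 0 *: A + B.
  apply: cvgD; last exact: cvg_cst.
  exact: cvgZr_tmp hid.
rewrite scale0r add0r in L.
apply: cvg_lim => //.
apply: cvg_trans L; apply: near_eq_cvg.
near=> h.
have h0 : h != 0 by near: h; exact: nbhs_dnbhs_neq.
rewrite /= addr0 [h%:A]mulr1 [0 ^+ 2]expr2 mulr0 !scale0r addr0 subr0.
by rewrite scalerDr !scalerA expr2 mulKf // mulVf // scale1r.
Unshelve. all: by end_near.
Qed.

Section S1.
Local Set Implicit Arguments. Local Unset Strict Implicit.
Variable R : realType.

Lemma is_derive_pow (a : nat) (t : R) :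
  is_derive t 1 (fun s : R => s ^+ a) (a%:R * t ^+ a.-1).
Proof.
split; first exact: exprn_derivable.
by rewrite exp_derive /= [_ *: 1]mulr1.
Qed.

Lemma is_derive_sq_comp (A A' : R -> R) :
  (forall s : R, is_derive s 1 A (A' s)) ->
  forall t : R, is_derive t 1 (fun t => A (t ^+ 2)) (2 * t * A' (t ^+ 2)).
Proof.
move=> hA t.
have dA : forall s : R, derivable A s 1 by move=> s; case: (hA s).
have ds : derivable (fun s : R => s ^+ 2) t 1 by exact: exprn_derivable.
have dc : derivable (A \o (fun s : R => s ^+ 2)) t 1.
  apply/derivable1_diffP; apply: differentiable_comp; apply/derivable1_diffP.
    exact: ds.
  exact: dA.
split => //.
rewrite -derive1E (derive1_comp ds (dA _)).
rewrite exp_derive1 derive1E.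
case: (hA (t ^+ 2)) => _ ->.
by rewrite /= expr1 mulrC.
Qed.

Lemma dterm (c : R) (a : nat) (A A' : R -> R) :
  (forall s : R, is_derive s 1 A (A' s)) ->
  forall t : R, is_derive t 1 (fun t => c * t ^+ a * A (t ^+ 2))
     (c * (a%:R * t ^+ a.-1) * A (t ^+ 2) + c * t ^+ a * (2 * t * A' (t ^+ 2))).
Proof.
move=> hA t.
have Hf : is_derive t 1 (fun s : R => c * s ^+ a) (c * (a%:R * t ^+ a.-1)).
  exact: (is_deriveZ c (is_derive_pow a t)).
have Hg := is_derive_sq_comp hA t.
have M := is_deriveM Hf Hg.
apply: (is_derive_eq M).
have E : forall x y : R, x *: y = x * y by []. rewrite !E; ring.
Qed.

Lemma der1_eq (g g' dg : R -> R) :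
  (forall t : R, is_derive t 1 g (dg t)) -> (forall t, dg t = g' t) ->
  derive1 g = g'.
Proof.
move=> hg e; apply/funext => t; rewrite derive1E.
by case: (hg t) => _ ->.
Qed.

Lemma d4 (H : nat -> R -> R) :
  (forall k (s : R), (k < 4)%N -> is_derive s 1 (H k) (H k.+1 s)) ->
  derive1n 4 (fun t => H 0%N (t ^+ 2)) 0 = 12 * H 2%N 0.
Proof.
move=> hH.
have h0 : forall s : R, is_derive s 1 (H 0%N) (H 1%N s) by move=> s; exact: hH.
have h1 : forall s : R, is_derive s 1 (H 1%N) (H 2%N s) by move=> s; exact: hH.
have h2 : forall s : R, is_derive s 1 (H 2%N) (H 3%N s) by move=> s; exact: hH.
have h3 : forall s : R, is_derive s 1 (H 3%N) (H 4%N s) by move=> s; exact: hH.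
have D1 : derive1 (fun t => H 0%N (t ^+ 2)) =
          (fun t => 2 * t ^+ 1 * H 1%N (t ^+ 2)).
  apply: (der1_eq (is_derive_sq_comp h0)) => t /=; ring.
have D2 : derive1 (fun t => 2 * t ^+ 1 * H 1%N (t ^+ 2)) =
          (fun t => 2 * t ^+ 0 * H 1%N (t ^+ 2) + 4 * t ^+ 2 * H 2%N (t ^+ 2)).
  apply: (der1_eq (dterm 2 1 h1)) => t /=; ring.
have D3 : derive1 (fun t => 2 * t ^+ 0 * H 1%N (t ^+ 2) + 4 * t ^+ 2 * H 2%N (t ^+ 2)) =
          (fun t => 12 * t ^+ 1 * H 2%N (t ^+ 2) + 8 * t ^+ 3 * H 3%N (t ^+ 2)).
  apply: (der1_eq (fun t => is_deriveD (dterm 2 0 h1 t) (dterm 4 2 h2 t))) => t /=; ring.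
have D4 := fun t => is_deriveD (dterm 12 1 h2 t) (dterm 8 3 h3 t).
rewrite /derive1n /= D1 D2 D3 derive1E.
case: (D4 0) => _ ->.
have -> : (0:R) ^+ 2 = 0 by rewrite expr0n. rewrite /=; ring.
Qed.

End S1.

Lemma part1 (R : realType) (n m : nat)
  (f : 'rV[R]_(n + m) -> R)
  (hf : Ck 5 f)
  (hpsd : psd (hessian f 0))
  (hker : forall v : 'rV[R]_(n + m),
      (hessian f 0 *m v^T = 0) <-> (exists y : 'rV[R]_m, v = row_mx 0 y))
  (x2 : 'rV[R]_n)
  (hsph : sqnorm (row_mx x2 (0 : 'rV[R]_m)) = 1)
  (hvan : derive1n 4 (fun t : R => f (row_mx (t ^+ 2 *: x2) (t *: (0 : 'rV[R]_m)))) 0 = 0) :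
  False.
Proof.
set M := hessian f 0.
set v : 'rV[R]_(n + m) := row_mx x2 0.
have x2nz : x2 != 0.
  apply/negP => /eqP x0; move: hsph; rewrite x0 row_mx0 /sqnorm.
  rewrite big1 => [/eqP|i _]; first by rewrite eq_sym oner_eq0.
  by rewrite mxE expr0n.
pose H k (s : R) := @G R _ v k f (s *: v).
have hH : forall k (s : R), (k < 4)%N -> is_derive s 1 (H k) (H k.+1 s).
  move=> k s hk; apply: (@line_G R _ v k f); exact: (@Ck_le R _ 5 k.+1 f hf (ltnW hk)).
have E : (fun t : R => f (row_mx (t ^+ 2 *: x2) (t *: (0 : 'rV[R]_m)))) =
         (fun t => H 0%N (t ^+ 2)).
  by apply/funext => t; rewrite /H /= /v scale_row_mx !scaler0.
rewrite E d4 // in hvan.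
have H20 : H 2%N 0 = 0.
  by move/eqP: hvan; rewrite mulf_eq0 pnatr_eq0 orFb => /eqP.
have sym : M^T = M by apply: hess_sym; exact: (@Ck_le R _ 5 2 f hf).
have q0 : (v *m M *m v^T) 0 0 = 0.
  have Ms : forall i j, M i j = M j i by move=> i j; rewrite -{1}sym mxE.
  rewrite -H20 /H /= scale0r mxE.
  rewrite (eq_bigr (fun j => \sum_i v 0 i * M i j * v 0 j)); last first.
    by move=> j _; rewrite !mxE mulr_suml.
  rewrite exchange_big; apply: eq_bigr => i _; rewrite mulr_sumr.
  apply: eq_bigr => j _.
  rewrite Ms -mulrA [_ * v 0 j]mulrC.
  by congr (_ * (_ * _)); rewrite /M mxE.
have Bsym : forall w : 'rV[R]_(n + m), (v *m M *m w^T) 0 0 = (w *m M *m v^T) 0 0.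
  move=> w.
  have T : (v *m M *m w^T)^T = w *m M *m v^T.
    by rewrite trmx_mul trmxK trmx_mul sym mulmxA.
  by rewrite -T [RHS]mxE.
have Bexp : forall (t : R) (w : 'rV[R]_(n + m)), ((v + t *: w) *m M *m (v + t *: w)^T) 0 0 =
    (v *m M *m v^T) 0 0 + 2 * t * (w *m M *m v^T) 0 0
    + t ^+ 2 * (w *m M *m w^T) 0 0.
  move=> t w.
  rewrite linearD linearZ /= !mulmxDl !mulmxDr -!scalemxAl -!scalemxAr.
  set a := v *m M *m v^T; set b := v *m M *m w^T.
  set c := w *m M *m v^T; set d := w *m M *m w^T.
  have e1 : forall A B : 'M[R]_1, (A + B) 0 0 = A 0 0 + B 0 0.
    by move=> A B; rewrite mxE.
  have e2 : forall (k : R) (A : 'M[R]_1), (k *: A) 0 0 = k * A 0 0.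
    by move=> k A; rewrite mxE.
  rewrite !e1 !e2 /b (Bsym w) -/c; ring.
have b0 : forall w : 'rV[R]_(n + m), (w *m M *m v^T) 0 0 = 0.
  move=> w; apply: (@lin_quad R _ ((w *m M *m w^T) 0 0)); first exact: hpsd.
  by move=> t; have := hpsd (v + t *: w); rewrite Bexp q0 add0r.
have Mv : M *m v^T = 0.
  apply/matrixP => k l; rewrite (ord1 l) [RHS]mxE.
  by have := b0 'e_k; rewrite -mulmxA -rowE mxE.
have [y hy] := (hker v).1 Mv.
move: hy; rewrite /v => /eq_row_mx [x0 _].
by move: x2nz; rewrite x0 eqxx.
Qed.


Theorem lemma6p5 (R : realType) (n m : nat)
  (f : 'rV[R]_(n + m) -> R)
  (hf : Ck 5 f)
  (hcrit : forall i : 'I_(n + m), pder [:: i] f 0 = 0)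
  (hf0 : f 0 = 0)
  (hm : (1 <= m)%N)
  (hpsd : psd (hessian f 0))
  (hrank : \rank (hessian f 0) = n)
  (hker : forall v : 'rV[R]_(n + m),
      (hessian f 0 *m v^T = 0) <-> (exists y : 'rV[R]_m, v = row_mx 0 y))
  (x2 : 'rV[R]_n) (y1 : 'rV[R]_m)
  (hsph : sqnorm (row_mx x2 y1) = 1)
  (hvan : forall k : nat, (k <= 4)%N ->
      derive1n k (fun t : R => f (row_mx (t ^+ 2 *: x2) (t *: y1))) 0 = 0) :
  y1 != 0 /\ k_active 1 (fun t : R => row_mx (t ^+ 2 *: x2) (t *: y1)).
Proof.
have y1nz : y1 != 0.
  apply/negP => /eqP y0; subst y1.
  exact: (@part1 R n m f hf hpsd hker x2 hsph (hvan 4%N isT)).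
split => //; split.
  by move=> i /andP[h1 h2]; move: (leq_trans h1 h2).
move=> K; have := K 1%N isT.
rewrite derive1n1 deriv_phi -(row_mx0 _ 1 n m) => /eq_row_mx [_ y0].
by move: y1nz; rewrite y0 eqxx.
Qed.
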